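(* Let $k$ be a field of characteristic $p>0$ and let $d_1,\ldots,d_{n+1}$ be positive integers. If the algebra $k[x_1,\ldots,x_{n+1}]/(x_1^{d_1}, \ldots, x_{n+1}^{d_{n+1}})$ has the weak Lefschetz property, then there exist forms $f_1,\ldots,f_{n+1}\in R=k[x_1,\ldots,x_n]$ of degrees $d_1,\ldots,d_{n+1}$ such that \[(R/(f_1,\ldots,f_{n+1}))(t) = \left[\frac{\prod_{i=1}^{n+1}(1-t^{d_i})}{(1-t)^n} \right].\]
   Context: For a graded algebra $C=\bigoplus_{i\ge 0}C_i$ over $k$ with finite-dimensional components, $C(t)=\sum_{i\ge0}\dim_k(C_i)t^i$ is its Hilbert series. For a power series $\sum_{i\ge 0}a_it^i$ with integer coefficients, $[\sum_{i\ge0} a_i t^i]$ denotes its truncation at the first negative coefficient, i.e. $\sum_{i<i_0}a_it^i$ where $i_0$ is the least index with $a_{i_0}<0$ (the whole series if there is none). A graded artinian algebra $A$ has the weak Lefschetz property if there is a linear form $\ell\in A_1$ such that for every $i$ the map $A_i\to A_{i+1}$, $a\mapsto \ell a$, is injective or surjective. *)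

(* Defs.v *)
From HB Require Import structures.
From mathcomp Require Import all_boot all_order all_algebra.
From mathcomp Require Import mpoly.
Set Implicit Arguments. Unset Strict Implicit. Unset Printing Implicit Defensive.
Import Order.TTheory GRing.Theory Num.Theory.
Local Open Scope ring_scope.

Definition in_ideal (k : fieldType) (n m : nat) (f : 'I_m -> {mpoly k[n]})
  (h : {mpoly k[n]}) : Prop :=
  exists g : 'I_m -> {mpoly k[n]}, h = \sum_(j < m) g j * f j.

(* [is_basis_mod f i b] : the degree-i forms b_0,...,b_{r-1} induce a k-basis
   of the degree-i component (R/(f))_i of the graded algebra R/(f),
   R = k[x_1..x_n] (the ideal (f) is generated by forms). *)
Definition is_basis_mod (k : fieldType) (n m : nat) (f : 'I_m -> {mpoly k[n]})
  (i r : nat) (b : 'I_r -> {mpoly k[n]}) : Prop :=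
  [/\ (forall j, b j \is i.-homog),
      (forall c : 'I_r -> k,
          in_ideal f (\sum_(j < r) c j *: b j) -> forall j, c j = 0) &
      (forall h : {mpoly k[n]}, h \is i.-homog ->
          exists c : 'I_r -> k, in_ideal f (h - \sum_(j < r) c j *: b j))].

(* dim_k (R/(f))_i = r *)
Definition hilb_fun_is (k : fieldType) (n m : nat) (f : 'I_m -> {mpoly k[n]})
  (i r : nat) : Prop :=
  exists b : 'I_r -> {mpoly k[n]}, is_basis_mod f i b.

(* Weak Lefschetz property of A = k[x_1..x_N]/(f): there is a linear form
   l in A_1 (represented by a linear form of the polynomial ring) such that,
   for every i, multiplication by l, A_i -> A_{i+1}, is injective or surjective. *)
Definition has_WLP (k : fieldType) (N m : nat) (f : 'I_m -> {mpoly k[N]}) : Prop :=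
  exists l : {mpoly k[N]}, l \is 1.-homog /\
    forall i : nat,
      (forall g : {mpoly k[N]}, g \is i.-homog ->
          in_ideal f (l * g) -> in_ideal f g)
      \/
      (forall h : {mpoly k[N]}, h \is i.+1.-homog ->
          exists g : {mpoly k[N]}, g \is i.-homog /\ in_ideal f (h - l * g)).

Definition monomial_ci (k : fieldType) (N : nat) (d : 'I_N -> nat) :
  'I_N -> {mpoly k[N]} := fun j => 'X_j ^+ d j.

(* Coefficient of t^i in  prod_j (1 - t^{d_j}) / (1 - t)^n  (an integer).
   The coefficient of t^e in 1/(1-t)^n is 'C(e + n - 1, e)
   (this also gives [e == 0] when n = 0, by truncated subtraction). *)
Definition num_poly (N : nat) (d : 'I_N -> nat) : {poly int} :=
  \prod_(j < N) (1 - 'X ^+ d j).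

Definition ratio_coef (n N : nat) (d : 'I_N -> nat) (i : nat) : int :=
  \sum_(j < i.+1) (num_poly d)`_j * ('C((i - j) + n - 1, i - j))%:Z.

(* Coefficient of t^i in the truncation [ sum_i a_i t^i ] at the first
   negative coefficient. *)
Definition trunc_coef (a : nat -> int) (i : nat) : int :=
  if [forall j : 'I_i.+1, 0 <= a j] then a i else 0.

(* Main.v *)
Require Import Defs.
From HB Require Import structures.
From mathcomp Require Import all_boot all_order all_algebra.
From mathcomp Require Import mpoly zify.
Set Implicit Arguments. Unset Strict Implicit. Unset Printing Implicit Defensive.
Import Order.TTheory GRing.Theory Num.Theory.
Local Open Scope ring_scope.

Section Ideal.
Variables (k : fieldType) (n m : nat) (f : 'I_m -> {mpoly k[n]}).

Lemma in_ideal0 : in_ideal f 0.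
Proof. by exists (fun _ => 0); rewrite big1 // => j _; rewrite mul0r. Qed.

Lemma in_idealD u v : in_ideal f u -> in_ideal f v -> in_ideal f (u + v).
Proof.
move=> [g ->] [h ->]; exists (fun j => g j + h j).
by rewrite -big_split; apply: eq_bigr => j _; rewrite mulrDl.
Qed.

Lemma in_idealMl p u : in_ideal f u -> in_ideal f (p * u).
Proof.
move=> [g ->]; exists (fun j => p * g j).
by rewrite mulr_sumr; apply: eq_bigr => j _; rewrite mulrA.
Qed.

Lemma in_idealZ c u : in_ideal f u -> in_ideal f (c *: u).
Proof. by move=> h; rewrite -mul_mpolyC; apply: in_idealMl. Qed.

Lemma in_idealN u : in_ideal f u -> in_ideal f (- u).
Proof. by move=> h; rewrite -scaleN1r; apply: in_idealZ. Qed.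

Lemma in_idealB u v : in_ideal f u -> in_ideal f v -> in_ideal f (u - v).
Proof. by move=> hu hv; apply: in_idealD => //; apply: in_idealN. Qed.

Lemma in_ideal_sum (T : Type) (s : seq T) (P : pred T) (F : T -> {mpoly k[n]}) :
  (forall x, P x -> in_ideal f (F x)) -> in_ideal f (\sum_(x <- s | P x) F x).
Proof.
move=> h; elim/big_ind: _ => //; [exact: in_ideal0 | exact: in_idealD].
Qed.

Lemma in_ideal_gen j : in_ideal f (f j).
Proof.
exists (fun i => (i == j)%:R); rewrite (bigD1 j) //= eqxx mul1r big1 ?addr0 //.
by move=> i /negbTE ->; rewrite mul0r.
Qed.

End Ideal.

Section Mono.
Variables (k : fieldType) (N : nat).
Implicit Types (p g u : {mpoly k[N]}) (e m a : 'X_{1..N}).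

Lemma mcoeff_MX p e m :
  (p * 'X_[e])@_m = if (e <= m)%MM then p@_(m - e)%MM else 0.
Proof.
case: ifP => hle.
  by rewrite -{1}(submK hle) addmC mcoeffMX.
apply/eqP; rewrite mcoeff_eq0; apply/negP => hin.
have := perm_mem (msuppMX p e) m; rewrite hin => /esym/mapP [m' _ hm].
by move: hle; rewrite hm lem_addr.
Qed.

Lemma lin_decomp (l : {mpoly k[N]}) : l \is 1.-homog ->
  l = \sum_(j < N) l@_U_(j) *: 'X_j.
Proof.
move=> hl; apply/mpolyP => m; rewrite raddf_sum /=.
case: (boolP (mdeg m == 1%N)) => [/mdeg1P [j /eqP ->] | hm].
  rewrite (bigD1 j) //= mcoeffZ mcoeffX eqxx mulr1 big1 ?addr0 //.
  by move=> i hi; rewrite mcoeffZ mcoeffX eq_mnm1 (negbTE hi) mulr0.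
rewrite (dhomog_nemf_coeff hl hm) big1 // => i _.
rewrite mcoeffZ mcoeffX; case: eqP => [he|]; last by rewrite mulr0.
by move: hm; rewrite -he mdeg1.
Qed.

Lemma coef_lmul (l : {mpoly k[N]}) g a : l \is 1.-homog ->
  (l * g)@_a = \sum_(j < N) l@_U_(j) * (if (0 < a j)%N then g@_(a - U_(j))%MM else 0).
Proof.
move=> hl; rewrite {1}(lin_decomp hl) mulr_suml raddf_sum /=.
apply: eq_bigr => j _; rewrite -scalerAl mcoeffZ (mulrC _ g) mcoeff_MX lep1mP.
by rewrite lt0n.
Qed.

End Mono.
Section Coords.
Variables (k : fieldType) (n : nat) (d : 'I_n.+1 -> nat).
Hypothesis hd : forall j, (0 < d j)%N.
Local Notation N := n.+1.
Local Notation S := {mpoly k[N]}.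
Local Notation I := (monomial_ci k d).

Definition Bm := (\sum_j d j)%N.
Definition DT := {ffun 'I_N -> 'I_Bm.+1}.
Definition mon (f : DT) : 'X_{1..N} := [multinom (f j : nat) | j < N].
Definition goodm (a : 'X_{1..N}) := [forall j, a j < d j]%N.
Definition Mi i : {set DT} := [set f : DT | goodm (mon f) && (mdeg (mon f) == i)].
Definition cc i := #|Mi i|.
Definition ev i (s : 'I_(cc i)) : 'X_{1..N} := mon (enum_val s).
Definition coords i (u : S) : 'rV[k]_(cc i) := \row_s u@_(ev s).
Definition polyi i (w : 'rV[k]_(cc i)) : S := \sum_s w 0 s *: 'X_[ev s].

Lemma ev_good i s : goodm (@ev i s) /\ mdeg (ev s) = i.
Proof. by have := enum_valP s; rewrite inE => /andP [-> /eqP]. Qed.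

Lemma mon_inj : injective mon.
Proof.
move=> f g /mnmP h; apply/ffunP => j; apply: val_inj.
by have := h j; rewrite !mnmE.
Qed.

Lemma ev_inj i : injective (@ev i).
Proof. by move=> s t /mon_inj /enum_val_inj. Qed.

Lemma exists_ev i a : goodm a -> mdeg a = i -> exists s, @ev i s = a.
Proof.
move=> ga da.
have hb j : (a j < Bm.+1)%N.
  have hj : (a j < d j)%N by move/forallP: ga.
  have hdj : (d j <= Bm)%N by rewrite /Bm (bigD1 j) //= leq_addr.
  by rewrite ltnS (leq_trans (ltnW hj) hdj).
pose f : DT := [ffun j => Ordinal (hb j)].
have mf : mon f = a by apply/mnmP => j; rewrite mnmE ffunE.
have fM : f \in Mi i by rewrite inE mf ga da /=.
by exists (enum_rank_in fM f); rewrite /ev enum_rankK_in.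
Qed.

Lemma sum_ind i (V : zmodType) (G : 'X_{1..N} -> V) a :
  \sum_(s < cc i) (if @ev i s == a then G (ev s) else 0) =
  if goodm a && (mdeg a == i) then G a else 0.
Proof.
case: ifP => [/andP [ga /eqP da] | hn].
  have [s0 hs0] := exists_ev ga da.
  rewrite (bigD1 s0) //= hs0 eqxx big1 ?addr0 // => t ht.
  by rewrite -hs0 (inj_eq (@ev_inj i)) (negbTE ht).
rewrite big1 // => t _; case: eqP => // he.
by have [g1 g2] := ev_good t; move: hn; rewrite -he g1 g2 eqxx.
Qed.

Lemma coords_polyi i (w : 'rV[k]_(cc i)) : coords i (polyi w) = w.
Proof.
apply/rowP => s; rewrite mxE /polyi raddf_sum /=.
rewrite (bigD1 s) //= mcoeffZ mcoeffX eqxx mulr1 big1 ?addr0 //.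
by move=> t ht; rewrite mcoeffZ mcoeffX (inj_eq (@ev_inj i)) (negbTE ht) mulr0.
Qed.

Lemma polyi_homog i (w : 'rV[k]_(cc i)) : polyi w \is i.-homog.
Proof.
apply: rpred_sum => s _; apply: rpredZ; rewrite dhomogX.
by apply/eqP; case: (ev_good s).
Qed.

Lemma coordsD i u v : coords i (u + v) = coords i u + coords i v.
Proof. by apply/rowP => s; rewrite !mxE mcoeffD. Qed.
Lemma coordsZ i c u : coords i (c *: u) = c *: coords i u.
Proof. by apply/rowP => s; rewrite !mxE mcoeffZ. Qed.
Lemma coords0 i : coords i 0 = 0.
Proof. by apply/rowP => s; rewrite !mxE mcoeff0. Qed.
Lemma coordsN i u : coords i (- u) = - coords i u.
Proof. by apply/rowP => s; rewrite !mxE mcoeffN. Qed.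
Lemma coordsB i u v : coords i (u - v) = coords i u - coords i v.
Proof. by rewrite coordsD coordsN. Qed.

Lemma polyiD i v w : polyi (v + w) = polyi v + @polyi i w.
Proof. by rewrite /polyi -big_split; apply: eq_bigr => s _; rewrite mxE scalerDl. Qed.
Lemma polyiZ i c w : polyi (c *: w) = c *: @polyi i w.
Proof. by rewrite /polyi scaler_sumr; apply: eq_bigr => s _; rewrite mxE scalerA. Qed.
Lemma polyi0 i : @polyi i 0 = 0.
Proof. by rewrite /polyi big1 // => s _; rewrite mxE scale0r. Qed.

Lemma ideal_coef u a : in_ideal I u -> goodm a -> u@_a = 0.
Proof.
move=> [g ->] ga; rewrite raddf_sum /= big1 // => j _.
rewrite /monomial_ci mpolyXn mcoeff_MX; case: ifP => // /mnm_lepP /(_ j).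
by rewrite mulmnE mnm1E eqxx mul1n leqNgt; move/forallP: ga => /(_ j) ->.
Qed.

Lemma coords_ideal i u : in_ideal I u -> coords i u = 0.
Proof.
by move=> hu; apply/rowP => s; rewrite !mxE; apply: ideal_coef => //; case: (ev_good s).
Qed.

Lemma reduce_mono i a : mdeg a = i -> in_ideal I ('X_[a] - polyi (coords i 'X_[a])).
Proof.
move=> da; case: (boolP (goodm a)) => ga.
  suff -> : polyi (coords i 'X_[a]) = 'X_[a] by rewrite subrr; apply: in_ideal0.
  rewrite /polyi (eq_bigr (fun s => if @ev i s == a then 'X_[ev s] else 0)).
    by rewrite sum_ind ga da eqxx.
  by move=> s _; rewrite mxE mcoeffX eq_sym; case: eqP => _; rewrite ?scale1r ?scale0r.
have -> : coords i 'X_[a] = 0.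
  apply/rowP => s; rewrite !mxE mcoeffX; case: eqP => // he.
  by case: (ev_good s); rewrite -he (negbTE ga).
rewrite polyi0 subr0.
move/forallPn: ga => [j hj]; rewrite -leqNgt in hj.
set e := (U_(j) *+ d j)%MM.
have le : (e <= a)%MM.
  apply/mnm_lepP => t; rewrite mulmnE mnm1E.
  by case: eqP => [<-|]; rewrite ?mul1n ?mul0n.
rewrite -(submK le) mpolyXD; apply: in_idealMl.
rewrite /e -mpolyXn; exact: (in_ideal_gen (monomial_ci k d) j).
Qed.

Lemma reduce i h : h \is i.-homog -> in_ideal I (h - polyi (coords i h)).
Proof.
move=> hh.
have pcD : {morph (fun u => @polyi i (coords i u)) : x y / x + y >-> x + y}.
  by move=> x y /=; rewrite coordsD polyiD.
have pc0 : @polyi i (coords i 0) = 0 by rewrite coords0 polyi0.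
rewrite {1 2}(mpolyE h) (big_morph _ pcD pc0) -sumrB big_seq.
apply: in_ideal_sum => a ha.
rewrite coordsZ polyiZ -scalerBr; apply: in_idealZ; apply: reduce_mono.
exact: (dhomog_mf hh ha).
Qed.

End Coords.
Section Lmat.
Variables (k : fieldType) (n : nat) (d : 'I_n.+1 -> nat).
Local Notation N := n.+1.
Local Notation S := {mpoly k[N]}.
Local Notation ev := (@ev n d).
Local Notation cc := (cc d).

Definition Lmx (l : S) i : 'M[k]_(cc i, cc i.+1) :=
  \matrix_(t, s) \sum_(j < N) l@_U_(j) * (((ev t + U_(j))%MM == ev s)%:R).

Lemma coords_lmul (l : S) i g : l \is 1.-homog ->
  coords d i.+1 (l * g) = coords d i g *m Lmx l i.
Proof.
move=> hl; apply/rowP => s; rewrite !mxE coef_lmul //.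
under [RHS]eq_bigr do rewrite !mxE mulr_sumr.
rewrite exchange_big /=; apply: eq_bigr => j _.
set a := ev s.
under eq_bigr do rewrite mulrCA -[_ * _]/(_ * _).
rewrite -mulr_sumr; congr (_ * _).
have [ga da] := ev_good s.
case: (posnP (a j)) => [a0|apos].
  rewrite big1 // => t _; case: eqP => [he|]; last by rewrite !mulr0.
  by move: a0; rewrite -he mnmDE mnm1E eqxx addn1.
have le : (U_(j) <= a)%MM by rewrite lep1mP -lt0n.
rewrite (eq_bigr (fun t => if ev t == (a - U_(j))%MM then g@_(ev t) else 0)).
  rewrite (sum_ind d i (fun b => g@_b)).
  suff -> : goodm d (a - U_(j))%MM && (mdeg (a - U_(j))%MM == i) by [].
  apply/andP; split.
    apply/forallP => t; rewrite mnmBE; apply: leq_ltn_trans (leq_subr _ _) _.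
    by move/forallP: ga.
  have := congr1 mdeg (submK le); rewrite mdegD mdeg1 da addn1 => -[->].
  by [].
move=> t _; have -> : ((ev t + U_(j))%MM == a) = (ev t == (a - U_(j))%MM).
  apply/eqP/eqP => [<-|->]; first by rewrite addmK.
  by rewrite submK.
by case: eqP => _; rewrite ?mulr1 ?mulr0.
Qed.

End Lmat.
Section BasisS.
Variables (k : fieldType) (n : nat) (d : 'I_n.+1 -> nat).
Hypothesis hd : forall j, (0 < d j)%N.
Local Notation N := n.+1.
Local Notation S := {mpoly k[N]}.
Local Notation I := (monomial_ci k d).
Variable l : S.

Definition Jr (u : S) := exists g, in_ideal I (u - l * g).

Lemma basisS i p (L : 'M[k]_(p, cc d i)) :
  (forall g, (coords d i (l * g) <= L)%MS) ->
  (forall w : 'rV_p, Jr (polyi (w *m L))) ->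
  (forall c : 'rV_(\rank (L^C)%MS), Jr (polyi (c *m row_base (L^C)%MS)) -> c = 0)
  /\ (forall h, h \is i.-homog ->
        exists c : 'rV_(\rank (L^C)%MS), Jr (h - polyi (c *m row_base (L^C)%MS))).
Proof.
move=> hL hW; set B := row_base _; split.
  move=> c [g hg]; have := coords_ideal i hg.
  rewrite coordsB coords_polyi => /eqP; rewrite subr_eq0 => /eqP hc.
  have h1 : (c *m B <= L :&: L^C)%MS.
    rewrite sub_capmx; apply/andP; split; first by rewrite hc hL.
    by apply: submx_trans (submxMl c B) _; rewrite eq_row_base submx_refl.
  move: h1; rewrite capmx_compl submx0 => /eqP hc0.
  by apply: (row_free_inj (row_base_free (L^C)%MS)); rewrite hc0 mul0mx.
move=> h hh; have hr := reduce d hh.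
have : (coords d i h <= L + L^C)%MS by apply: submx_full; apply: addsmx_compl_full.
move=> /sub_addsmxP [[u1 u2] /= hv].
have hB : (u2 *m (L^C)%MS <= B)%MS by rewrite eq_row_base; apply: submxMl.
exists (u2 *m (L^C)%MS *m pinvmx B); rewrite (mulmxKpV hB).
have [g hg] := hW u1; exists g.
have -> : h - polyi (u2 *m (L^C)%MS) - l * g =
   (h - polyi (coords d i h)) + (polyi (u1 *m L) - l * g).
  by rewrite hv polyiD; rewrite !opprD !addrA; congr (_ - _); rewrite addrAC subrK.
exact: in_idealD.
Qed.

End BasisS.
Section WLPS.
Variables (k : fieldType) (n : nat) (d : 'I_n.+1 -> nat).
Hypothesis hd : forall j, (0 < d j)%N.
Local Notation N := n.+1.
Local Notation S := {mpoly k[N]}.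
Local Notation I := (monomial_ci k d).
Variable l : S.
Hypothesis hl : l \is 1.-homog.

Definition injS i := forall g : S, g \is i.-homog -> in_ideal I (l * g) -> in_ideal I g.
Definition Sj i (h : S) := exists g : S, g \is i.-homog /\ in_ideal I (h - l * g).
Definition surjS i := forall h : S, h \is i.+1.-homog -> Sj i h.

Lemma lg_homog i g : g \is i.-homog -> l * g \is i.+1.-homog.
Proof. by move=> hg; have := dhomogM hl hg; rewrite add1n. Qed.

Lemma inj_rank i : injS i -> \rank (Lmx d l i) = cc d i.
Proof.
move=> hi; apply/eqP; rewrite -/(row_free _) -kermx_eq0; apply/eqP.
apply/row_matrixP => r; rewrite row0; set w := row r _.
have hw : w *m Lmx d l i = 0 by rewrite /w -row_mul mulmx_ker row0.
have hg := polyi_homog w.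
have := reduce d (lg_homog hg); rewrite (coords_lmul d _ _ hl) coords_polyi hw polyi0 subr0.
move/hi => /(_ hg) /(coords_ideal i); rewrite coords_polyi.
exact.
Qed.

Lemma surj_rank i : surjS i -> \rank (Lmx d l i) = cc d i.+1.
Proof.
move=> hs; apply/eqP; rewrite -/(row_full _) -sub1mx; apply/row_subP => r.
set v := row r _.
have [g [hg hi]] := hs _ (polyi_homog v).
have := coords_ideal i.+1 hi.
rewrite coordsB coords_polyi (coords_lmul d _ _ hl) => /eqP; rewrite subr_eq0 => /eqP ->.
exact: submxMl.
Qed.

Lemma Sj0 i : Sj i 0.
Proof. by exists 0; rewrite dhomog0 mulr0 subr0; split => //; apply: in_ideal0. Qed.

Lemma SjD i u v : Sj i u -> Sj i v -> Sj i (u + v).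
Proof.
move=> [g [hg hu]] [g' [hg' hv]]; exists (g + g'); split; first exact: rpredD.
have -> : u + v - l * (g + g') = (u - l * g) + (v - l * g').
  by rewrite mulrDr opprD !addrA (addrAC u v).
exact: in_idealD.
Qed.

Lemma SjZ i c u : Sj i u -> Sj i (c *: u).
Proof.
move=> [g [hg hu]]; exists (c *: g); split; first exact: rpredZ.
by rewrite -scalerAr -scalerBr; apply: in_idealZ.
Qed.

Lemma Sj_sum i (T : Type) (s : seq T) (P : pred T) (F : T -> S) :
  (forall x, P x -> Sj i (F x)) -> Sj i (\sum_(x <- s | P x) F x).
Proof. by move=> h; elim/big_ind: _ => //; [exact: Sj0 | exact: SjD]. Qed.

Lemma surj_prop i : surjS i -> surjS i.+1.
Proof.
move=> hs h hh; rewrite (mpolyE h) big_seq; apply: Sj_sum => a ha.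
apply: SjZ; have da : mdeg a = i.+2 := dhomog_mf hh ha.
have [j hj] : exists j, a j != 0%N.
  apply/existsP; apply: contraT; rewrite negb_exists => /forallP h0.
  have : mdeg a = 0%N by rewrite mdegE big1 // => t _; exact/eqP/negPn/h0.
  by move=> h0a; move: da; rewrite h0a.
have le : (U_(j) <= a)%MM by rewrite lep1mP.
have ha' : ('X_[(a - U_(j))%MM] : S) \is i.+1.-homog.
  rewrite dhomogX; apply/eqP; have := congr1 mdeg (submK le).
  by rewrite mdegD mdeg1 da addn1 => -[h1]; exact: h1.
have [g [hg hi]] := hs _ ha'.
exists ('X_j * g); split.
  have hx : ('X_j : S) \is 1.-homog by rewrite dhomogX; apply/eqP; exact: mdeg1.
  by have := dhomogM hx hg; rewrite add1n.
rewrite -(submK le) mpolyXD (mulrC _ 'X_[U_(j)]) mulrCA -mulrBr.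
exact: in_idealMl.
Qed.

End WLPS.
Section Hyps.
Variables (k : fieldType) (n : nat) (d : 'I_n.+1 -> nat).
Local Notation N := n.+1.
Local Notation S := {mpoly k[N]}.
Local Notation I := (monomial_ci k d).
Variable l : S.
Hypothesis hl : l \is 1.-homog.

Lemma hypL_succ i :
  (forall g, (coords d i.+1 (l * g) <= Lmx d l i)%MS) /\
  (forall w : 'rV_(cc d i), Jr d l (polyi (w *m Lmx d l i))).
Proof.
split; first by move=> g; rewrite (coords_lmul d _ _ hl); apply: submxMl.
move=> w; exists (polyi w).
have := reduce d (lg_homog hl (polyi_homog w)).
rewrite (coords_lmul d _ _ hl) coords_polyi => /in_idealN.
by rewrite opprB.
Qed.

Lemma hypL_zero :
  (forall g, (coords d 0 (l * g) <= (0 : 'M[k]_(0, cc d 0)))%MS) /\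
  (forall w : 'rV_0, Jr d l (polyi (w *m (0 : 'M[k]_(0, cc d 0))))).
Proof.
split; last first.
  by move=> w; exists 0; rewrite mulmx0 polyi0 mulr0 subr0; apply: in_ideal0.
move=> g; suff -> : coords d 0 (l * g) = 0 by apply: sub0mx.
apply/rowP => s; rewrite !mxE coef_lmul //.
rewrite big1 // => j _; have [_ da] := ev_good s.
case: ifP => [hp|]; last by rewrite mulr0.
move: da; rewrite mdegE => /eqP; rewrite sum_nat_eq0 => /forallP /(_ j) /eqP h0.
by rewrite h0 in hp.
Qed.

End Hyps.
Section CompGen.
Variable (R : comRingType).

Lemma comp_comp n1 n2 n3 (p : {mpoly R[n1]}) (t1 : n1.-tuple {mpoly R[n2]})
  (t2 : n2.-tuple {mpoly R[n3]}) :
  (p \mPo t1) \mPo t2 = p \mPo [tuple (tnth t1 i) \mPo t2 | i < n1].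
Proof.
rewrite (comp_mpolyEX p t1) (comp_mpolyEX p) raddf_sum /=; apply: eq_bigr => m _.
rewrite comp_mpolyZ !comp_mpolyX rmorph_prod /=; congr (_ *: _).
by apply: eq_bigr => i _; rewrite rmorphXn tnth_mktuple.
Qed.

Lemma comp_sum n1 n2 (t : n1.-tuple {mpoly R[n2]}) (I : finType) (F : I -> {mpoly R[n1]}) :
  (\sum_i F i) \mPo t = \sum_i (F i \mPo t).
Proof. exact: (big_morph _ (comp_mpolyD t) (comp_mpoly0 t)). Qed.

Lemma prod_homog n (I : finType) (F : I -> {mpoly R[n]}) (e : I -> nat) :
  (forall i, F i \is (e i).-homog) -> \prod_i F i \is (\sum_i e i)%N.-homog.
Proof.
move=> h; apply: (big_rec2 (fun (x : nat) (y : {mpoly R[n]}) => y \is x.-homog)).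
  exact: dhomog1.
by move=> i x y _ hy; apply: dhomogM.
Qed.

Lemma comp_homog n1 n2 (p : {mpoly R[n1]}) (t : n1.-tuple {mpoly R[n2]}) e :
  p \is e.-homog -> (forall j, tnth t j \is 1.-homog) -> p \mPo t \is e.-homog.
Proof.
move=> hp ht; rewrite comp_mpolyE big_seq; apply: rpred_sum => m hm; apply: rpredZ.
have -> : e = (\sum_i (1 * m i))%N.
  rewrite -(dhomog_mf hp hm) /= mdegE; apply: eq_bigr => i _; by rewrite mul1n.
apply: (prod_homog (F := fun i => tnth t i ^+ m i) (e := fun i => (1 * m i)%N)) => i.
exact: dhomogMn.
Qed.

End CompGen.

Section Subst.
Variables (k : fieldType) (n : nat) (m : 'I_n.+1) (lam : 'I_n.+1 -> k).
Hypothesis hm : lam m != 0.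
Local Notation N := n.+1.
Local Notation S := {mpoly k[N]}.
Local Notation R := {mpoly k[n]}.

Definition lform : S := \sum_(j < N) lam j *: 'X_j.
Definition phiX (j : 'I_N) : R :=
  if unlift m j is Some s then 'X_s else - (lam m)^-1 *: \sum_(s < n) lam (lift m s) *: 'X_s.
Definition tphi : N.-tuple R := [tuple phiX j | j < N].
Definition tiota : n.-tuple S := [tuple 'X_(lift m s) | s < n].

Lemma tphi_homog j : tnth tphi j \is 1.-homog.
Proof.
rewrite tnth_mktuple /phiX; case: unliftP => [s _|_].
  by rewrite dhomogX; apply/eqP; exact: mdeg1.
apply: rpredZ; apply: rpred_sum => s _; apply: rpredZ.
by rewrite dhomogX; apply/eqP; exact: mdeg1.
Qed.

Lemma tiota_homog j : tnth tiota j \is 1.-homog.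
Proof. by rewrite tnth_mktuple dhomogX; apply/eqP; exact: mdeg1. Qed.

Lemma XmPo n1 n2 (t : n1.-tuple {mpoly k[n2]}) i : 'X_i \mPo t = tnth t i.
Proof. by rewrite comp_mpolyXU (tnth_nth 0). Qed.

Lemma phi_iota (q : R) : (q \mPo tiota) \mPo tphi = q.
Proof.
rewrite comp_comp -[RHS]comp_mpoly_id; congr (_ \mPo _).
apply: eq_from_tnth => s; rewrite !tnth_mktuple XmPo tnth_mktuple /phiX.
by rewrite liftK.
Qed.

Lemma lform_split : lform = lam m *: 'X_m + \sum_(s < n) lam (lift m s) *: 'X_(lift m s).
Proof. by rewrite /lform (bigD1_ord m). Qed.

Lemma phi_l : lform \mPo tphi = 0.
Proof.
rewrite lform_split raddfD /= !comp_mpolyZ !XmPo raddf_sum /= tnth_mktuple /phiX.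
rewrite unlift_none scalerA mulrN mulfV // scaleN1r.
under eq_bigr do rewrite comp_mpolyZ XmPo tnth_mktuple /phiX liftK.
by rewrite addNr.
Qed.

Definition Ml (u : S) := exists g, u = lform * g.

Lemma Ml0 : Ml 0. Proof. by exists 0; rewrite mulr0. Qed.
Lemma MlD u v : Ml u -> Ml v -> Ml (u + v).
Proof. by move=> [g ->] [h ->]; exists (g + h); rewrite mulrDr. Qed.
Lemma MlM p u : Ml u -> Ml (p * u).
Proof. by move=> [g ->]; exists (p * g); rewrite mulrCA. Qed.
Lemma MlZ c u : Ml u -> Ml (c *: u).
Proof. by move=> h; rewrite -mul_mpolyC; apply: MlM. Qed.

Lemma Ml_prod (I : finType) (F G : I -> S) :
  (forall i, Ml (F i - G i)) -> Ml (\prod_i F i - \prod_i G i).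
Proof.
move=> h; apply: (big_rec2 (fun x y => Ml (x - y))); first by rewrite subrr; exact: Ml0.
move=> i x y _ hxy.
have -> : F i * x - G i * y = F i * (x - y) + y * (F i - G i).
  by rewrite mulrBr mulrBr (mulrC y) addrA subrK (mulrC y).
by apply: MlD; apply: MlM.
Qed.

Lemma Ml_exp a b e : Ml (a - b) -> Ml (a ^+ e - b ^+ e).
Proof.
move=> h; elim: e => [|e ih]; first by rewrite !expr0 subrr; exact: Ml0.
have -> : a ^+ e.+1 - b ^+ e.+1 = a * (a ^+ e - b ^+ e) + b ^+ e * (a - b).
  by rewrite !exprS mulrBr mulrBr (mulrC (b ^+ e) a) addrA subrK (mulrC (b ^+ e)).
by apply: MlD; apply: MlM.
Qed.

Lemma Ml_comp (v : S) (T : N.-tuple S) :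
  (forall j, Ml (tnth T j - 'X_j)) -> Ml (v \mPo T - v).
Proof.
move=> hT; rewrite comp_mpolyE [X in _ - X](mpolyE v) -sumrB.
elim/big_ind: _ => //; [exact: Ml0 | exact: MlD | move=> a _].
rewrite -scalerBr; apply: MlZ; rewrite mpolyXE_id; apply: Ml_prod => j.
exact: Ml_exp.
Qed.

Lemma psi_cong (v : S) : Ml (v - ((v \mPo tphi) \mPo tiota)).
Proof.
suff : Ml ((v \mPo tphi) \mPo tiota - v).
  by move=> [g hg]; exists (- g); rewrite mulrN -hg opprB.
rewrite comp_comp; apply: Ml_comp => j; rewrite tnth_mktuple tnth_mktuple /phiX.
case: unliftP => [s ->|->].
  by rewrite XmPo tnth_mktuple subrr; exact: Ml0.
rewrite comp_mpolyZ comp_sum.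
under eq_bigr do rewrite comp_mpolyZ XmPo tnth_mktuple.
have -> : \sum_(s < n) lam (lift m s) *: ('X_(lift m s) : S) = lform - lam m *: 'X_m.
  by rewrite lform_split addrAC subrr add0r.
exists (- (lam m)^-1)%:MP.
rewrite scalerBr scalerA mulNr mulVf // scaleN1r opprK addrK.
by rewrite mulrC mul_mpolyC.
Qed.

End Subst.
Section Transfer.
Variables (k : fieldType) (n : nat) (d : 'I_n.+1 -> nat).
Hypothesis hd : forall j, (0 < d j)%N.
Variables (m : 'I_n.+1) (lam : 'I_n.+1 -> k).
Hypothesis hm : lam m != 0.
Local Notation N := n.+1.
Local Notation S := {mpoly k[N]}.
Local Notation R := {mpoly k[n]}.
Local Notation I := (monomial_ci k d).
Local Notation l := (lform lam).
Local Notation tphi := (tphi m lam).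
Local Notation tiota := (tiota k m).

Definition fR (j : 'I_N) : R := ('X_j ^+ d j : S) \mPo tphi.

Lemma fR_homog j : fR j \is (d j).-homog.
Proof.
apply: comp_homog; last exact: tphi_homog.
have hx : ('X_j : S) \is 1.-homog by rewrite dhomogX; apply/eqP; exact: mdeg1.
by have := dhomogMn (d j) hx; rewrite mul1n.
Qed.

Lemma phi_I u : in_ideal I u -> in_ideal fR (u \mPo tphi).
Proof.
move=> [g ->]; exists (fun j => g j \mPo tphi).
by rewrite comp_sum; apply: eq_bigr => j _; rewrite rmorphM.
Qed.

Lemma J_to u : Jr d l u -> in_ideal fR (u \mPo tphi).
Proof.
move=> [g /phi_I]; by rewrite rmorphB rmorphM /= phi_l // mul0r subr0.
Qed.

Lemma J_from u : in_ideal fR (u \mPo tphi) -> Jr d l u.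
Proof.
move=> [h hu].
set v := u - \sum_j (h j \mPo tiota) * 'X_j ^+ d j.
have hv : v \mPo tphi = 0.
  rewrite rmorphB /= comp_sum hu; apply/eqP; rewrite subr_eq0; apply/eqP; apply: eq_bigr => j _.
  by rewrite rmorphM /= phi_iota.
have [g hg] := psi_cong hm v; exists g.
move: hg; rewrite hv comp_mpoly0 subr0 => <-.
rewrite /v opprB addrC subrK; exists (fun j => h j \mPo tiota).
by [].
Qed.

Lemma hilbR i p (L : 'M[k]_(p, cc d i)) :
  (forall g, (coords d i (l * g) <= L)%MS) ->
  (forall w : 'rV_p, Jr d l (polyi (w *m L))) ->
  hilb_fun_is fR i (\rank (L^C)%MS).
Proof.
move=> h1 h2; have [hind hspan] := basisS h1 h2.
set B := row_base _ in hind hspan.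
pose b j := polyi (row j B) \mPo tphi.
have hsum (c : 'rV[k]_(\rank (L^C)%MS)) :
    \sum_j c 0 j *: b j = polyi (c *m B) \mPo tphi.
  rewrite mulmx_sum_row (big_morph _ (@polyiD _ _ _ _) (polyi0 _ _ _)) comp_sum.
  by apply: eq_bigr => j _; rewrite polyiZ comp_mpolyZ.
exists b; split.
- move=> j; apply: comp_homog; [exact: polyi_homog | exact: tphi_homog].
- move=> c hc j; pose c' := \row_j0 c j0.
  have : c' = 0.
    apply: hind; apply: J_from; rewrite -hsum.
    by under eq_bigr do rewrite mxE.
  by move/rowP/(_ j); rewrite !mxE.
- move=> h hh.
  have hi : h \mPo tiota \is i.-homog by apply: comp_homog => //; exact: tiota_homog.
  have [c hc] := hspan _ hi; exists (fun j => c 0 j).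
  have := J_to hc; rewrite rmorphB /= phi_iota -hsum.
  by [].
Qed.

End Transfer.
Section Count.
Variables (n : nat) (d : 'I_n.+1 -> nat).
Local Notation N := n.+1.

Definition Pp : {poly int} := \prod_(j < N) \sum_(a < d j) 'X^a.

Lemma cc_coef i : ((cc d i)%:Z = Pp`_i)%R.
Proof.
have hB j : (d j <= (Bm d).+1)%N.
  by apply: leqW; rewrite /Bm (bigD1 j) //= leq_addr.
have -> : Pp = \prod_(j < N) \sum_(a < (Bm d).+1 | (a < d j)%N) 'X^a.
  apply: eq_bigr => j _; rewrite (big_ord_widen_cond _ (fun _ => true) (fun a => ('X^a : {poly int})) (hB j)).
  by [].
rewrite (bigA_distr_big_dep (fun j (a : 'I_(Bm d).+1) => (a < d j)%N) (fun _ a => 'X^a)).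
under eq_bigr do rewrite prodrXr.
rewrite coef_sum.
under eq_bigr do rewrite coefXn.
rewrite (eq_bigr (fun f : DT d => if (i == (\sum_j (f j : nat))%N) then (1 : int) else 0)); last first.
  by move=> f _; case: eqP.
rewrite -big_mkcondr /= sumr_const pmulrn intz /cc; congr Posz.
apply: eq_card => f; rewrite !inE.
have -> : mdeg (mon f) = (\sum_j f j)%N by rewrite mdegE; apply: eq_bigr => j _; rewrite mnmE.
rewrite eq_sym; congr (_ && _).
by apply/forallP/familyP => h j; have := h j; rewrite /= ?mnmE.
Qed.

End Count.
Section Conv.

Lemma Tstep K (a : nat -> int) i :
  \sum_(j < i.+1) a j * ('C((i - j) + K, i - j))%:Z =
  \sum_(l < i.+1) \sum_(j < l.+1) a j * ('C((l - j) + K - 1, l - j))%:Z.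
Proof.
elim: i => [|i IH].
  by rewrite !big_ord1 /= !bin0.
rewrite [RHS]big_ord_recr /= -IH [LHS]big_ord_recr [X in _ = _ + X]big_ord_recr /=.
rewrite !subnn !bin0 [RHS]addrA; congr (_ + _).
rewrite -big_split /=; apply: eq_bigr => j _; have hj : (j <= i)%N by rewrite -ltnS.
rewrite subSn // addSn binS PoszD mulrDr addrC; congr (_ + _).
by rewrite subn1.
Qed.

Lemma telesc (Q : {poly int}) i : \sum_(l < i.+1) ((1 - 'X) * Q)`_l = Q`_i.
Proof.
elim: i => [|i IH].
  by rewrite big_ord1 mulrBl mul1r coefB coefXM /= subr0.
by rewrite big_ord_recr /= IH mulrBl mul1r coefB coefXM /= addrC subrK.
Qed.

Lemma Tconv K (Q : {poly int}) i :
  \sum_(j < i.+1) ((1 - 'X) ^+ K * Q)`_j * ('C((i - j) + K - 1, i - j))%:Z = Q`_i.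
Proof.
elim: K Q i => [|K IH] Q i.
  rewrite expr0 mul1r big_ord_recr /= subnn bin0 mulr1 big1 ?add0r // => j _.
  have hj : (0 < i - j)%N by rewrite subn_gt0.
  rewrite addn0 bin_small ?mulr0 //; move: hj; case: (i - j)%N => //= e _.
  by rewrite subn1.
have -> : (1 - 'X) ^+ K.+1 * Q = (1 - 'X) ^+ K * ((1 - 'X) * Q).
  by rewrite exprSr -mulrA.
under eq_bigr do rewrite addnS subn1 /=.
rewrite Tstep -[RHS]telesc; apply: eq_bigr => l _; exact: IH.
Qed.

End Conv.

Lemma num_poly_eq n (d : 'I_n.+1 -> nat) : num_poly d = (1 - 'X) ^+ n.+1 * Pp d.
Proof.
rewrite /num_poly /Pp.
have -> : (1 - 'X) ^+ n.+1 = \prod_(j < n.+1) (1 - 'X : {poly int}).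
  by rewrite prodr_const card_ord.
rewrite -big_split /=; apply: eq_bigr => j _.
rewrite -{1}(expr1n _ (d j)) subrXX; congr (_ * _); apply: eq_bigr => a _.
by rewrite expr1n mul1r.
Qed.

Lemma ratio_cc n (d : 'I_n.+1 -> nat) i :
  ratio_coef n d i = (cc d i)%:Z - (if i is i'.+1 then (cc d i')%:Z else 0).
Proof.
rewrite /ratio_coef num_poly_eq.
have -> : (1 - 'X) ^+ n.+1 * Pp d = (1 - 'X) ^+ n * ((1 - 'X) * Pp d).
  by rewrite exprSr -mulrA.
rewrite Tconv mulrBl mul1r coefB coefXM !cc_coef.
by case: i => // i; rewrite cc_coef.
Qed.
Section Main.
Variables (k : fieldType) (n : nat) (d : 'I_n.+1 -> nat).
Hypothesis hd : forall j, (0 < d j)%N.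
Variables (m : 'I_n.+1) (lam : 'I_n.+1 -> k).
Hypothesis hm : lam m != 0.
Local Notation N := n.+1.
Local Notation S := {mpoly k[N]}.
Local Notation l := (lform lam).

Lemma lform_homog : l \is 1.-homog.
Proof.
apply: rpred_sum => j _; apply: rpredZ.
by rewrite dhomogX; apply/eqP; exact: mdeg1.
Qed.

Lemma surj_ge j i : surjS d l j -> (j <= i)%N -> surjS d l i.
Proof.
move=> hj; elim: i => [|i IH]; first by rewrite leqn0 => /eqP <-.
rewrite leq_eqVlt => /orP [/eqP <- //|]; rewrite ltnS => /IH.
exact: surj_prop.
Qed.

Lemma main_lemma :
  (forall i, injS d l i \/ surjS d l i) ->
  forall i : nat, exists r : nat,
    hilb_fun_is (fR d m lam) i r /\ r%:Z = trunc_coef (ratio_coef n d) i.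
Proof.
move=> hw i; have hl := lform_homog.
case: i => [|i].
  have [h1 h2] := hypL_zero d hl.
  exists (\rank ((0 : 'M[k]_(0, cc d 0))^C)%MS); split; first exact: hilbR.
  rewrite mxrank_compl mxrank0 subn0 /trunc_coef.
  have -> : [forall j : 'I_1, 0 <= ratio_coef n d j] = true.
    by apply/forallP => j; rewrite (ord1 j) ratio_cc subr0.
  by rewrite ratio_cc subr0.
have [h1 h2] := hypL_succ d hl i.
exists (\rank ((Lmx d l i)^C)%MS); split; first exact: hilbR.
rewrite mxrank_compl /trunc_coef.
have rr := rank_leq_row (Lmx d l i); have rc := rank_leq_col (Lmx d l i).
case: ifP => [/forallP hpos | /negbT hneg].
  have := hpos ord_max; rewrite /= ratio_cc => ha.

  case: (hw i) => [/(inj_rank hl) e | /(surj_rank hl) e]; lia.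
have [j hj] : exists j : 'I_i.+2, ~~ (0 <= ratio_coef n d j).
  by apply/existsP; move: hneg; rewrite negb_forall.
move: hj; rewrite ratio_cc; case: j => [[|j] hj] /=.
  by [].
move=> hneg'.
case: (hw j) => [/(inj_rank hl) hr|hs].
  have := rank_leq_col (Lmx d l j); rewrite hr; lia.
have := surj_rank hl (surj_ge hs (_ : (j <= i)%N)); rewrite ltnS in hj.
move=> /(_ hj) ->; rewrite subnn; lia.
Qed.

End Main.
Theorem theorem4p17 (k : fieldType) (p : nat) (hp : p \in [pchar k])
  (n : nat) (d : 'I_n.+1 -> nat) (hd : forall j, (0 < d j)%N) :
  has_WLP (monomial_ci k d) ->
  exists f : 'I_n.+1 -> {mpoly k[n]},
    (forall j, f j \is (d j).-homog) /\
    (forall i : nat, exists r : nat,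
        hilb_fun_is f i r /\ r%:Z = trunc_coef (ratio_coef n d) i).
Proof.
move=> [l [hl hw]].
case: (pickP (fun j => l@_U_(j) != 0)) => [m hm | h0].
  have el : l = lform (fun j => l@_U_(j)) := lin_decomp hl.
  exists (fR d m (fun j => l@_U_(j))); split; first exact: fR_homog.
  by apply: main_lemma => // i; rewrite -el; exact: hw.
have l0 : l = 0.
  rewrite (lin_decomp hl) big1 // => j _.
  by move/negbT: (h0 j); rewrite negbK => /eqP ->; rewrite scale0r.
have s0 : surjS d l 0.
  case: (hw 0%N) => // hinj; exfalso.
  have := hinj 1 (dhomog1 _ _); rewrite l0 mul0r => /(_ (in_ideal0 _)) h1.
  have hg0 : goodm d (0%MM : 'X_{1..n.+1}) by apply/forallP => j; rewrite mnm0E; exact: hd.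
  by have := ideal_coef h1 hg0; rewrite mcoeff1 eqxx => /eqP; rewrite oner_eq0.
have sall i : surjS d l i.
  elim: i => [//|i IH]; exact: surj_prop IH.
pose lam := fun j : 'I_n.+1 => ((j == ord0)%:R : k).
have hm : lam ord0 != 0 by rewrite /lam eqxx oner_eq0.
exists (fR d ord0 lam); split; first exact: fR_homog.
apply: (main_lemma hm) => i; right; rewrite /surjS => h hh.
have [g [_ hg]] := sall i h hh; exists 0; split; first exact: dhomog0.
by move: hg; rewrite l0 mul0r mulr0.
Qed.
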